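(* Let $C_\infty=(\mathbb{N},+)$ and let $\mathcal{A}$ be an $\mathbb{H}C_\infty$-module. For every integer $r\ge2$, $H^{r+1}(C_\infty,r;\mathcal{A})=0$.
   Context: General setting (for a commutative monoid $M$ with identity $e$, written multiplicatively; for $C_\infty$ read $xy$ as $x+y$, $e$ as $0$): $\mathbb{H}M$ has objects the elements of $M$ and morphisms $(x,y):x\to xy$, composition $(xy,z)(x,y)=(x,yz)$. An $\mathbb{H}M$-module $\mathcal{A}$ is a functor $\mathbb{H}M\to\mathbf{Ab}$: groups $\mathcal{A}(x)$ with $y_*:\mathcal{A}(x)\to\mathcal{A}(xy)$, $y_*z_*=(yz)_*$, $e_*=\mathrm{id}$. Tensor product $(\mathcal{A}\otimes_{\mathbb{H}M}\mathcal{B})(x)=\bigoplus_{zt=x}\mathcal{A}(z)\otimes\mathcal{B}(t)/(u_*a\otimes b=a\otimes u_*b)$; unit the constant module $\mathbb{Z}$; chain complexes of $\mathbb{H}M$-modules form a symmetric monoidal category with Koszul signs. A commutative DGA-algebra over $\mathbb{H}M$ is a commutative monoid $(\mathcal{A},\circ,\iota)$ there with a monoid morphism $\epsilon:\mathcal{A}\to\mathbb{Z}$, $\epsilon_x(a)=\tilde\epsilon(a)x$. Its reduced bar construction $\mathbf{B}(\mathcal{A})$ has $\mathbf{B}(\mathcal{A})_n(x)$ generated by $[\,]$ (degree $0$) and $[a_1|\cdots|a_p]$ with $a_i\in(\mathrm{coker}\,\iota)_{r_i}(x_i)$, $x_1\cdots x_p=x$, $p+\sum r_i=n$; differential $\partial[a_1|\cdots|a_p]=-\sum_i(-1)^{e_{i-1}}[\cdots|\partial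 a_i|\cdots]+\tilde\epsilon(a_1)x_{1*}[a_2|\cdots]+\sum_{i<p}(-1)^{e_i}[\cdots|a_i\circ a_{i+1}|\cdots]+(-1)^{e_p}\tilde\epsilon(a_p)x_{p*}[\cdots|a_{p-1}]$, $e_i=i+r_1+\cdots+r_i$; multiplication the signed shuffle product $[a_1|\cdots|a_p]\circ[a_{p+1}|\cdots|a_{p+q}]=\sum_\sigma(-1)^{e(\sigma)}[a_{\sigma^{-1}(1)}|\cdots|a_{\sigma^{-1}(p+q)}]$, $e(\sigma)=\sum_{\sigma(i)>\sigma(p+j)}(1+r_i)(1+r_{p+j})$; unit $[\,]$; augmentation $\mathbf{B}(\mathcal{A})_0\cong\mathbb{Z}$. It is again such an algebra, so $\mathbf{B}^r$ is defined. $\mathcal{Z}M$: $\mathcal{Z}M(x)$ free abelian on $\{(u,v):uv=x\}$, $y_*(u,v)=(yu,v)$, $(u,v)\circ(w,t)=(uw,vt)$, unit $(e,e)$, degree $0$, augmentation $(u,v)\mapsto$ generator of $\mathbb{Z}(x)$. $H^n(M,r;\mathcal{A})=H^n(\mathrm{Hom}_{\mathbb{H}M}(\mathbf{B}^r(\mathcal{Z}M),\mathcal{A}))$. *)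

(* Defs.v *)
From mathcomp Require Import all_boot all_algebra.
Unset Printing Implicit Defensive.
Import GRing.Theory.
Local Open Scope ring_scope.

(** The category H C_oo has objects n : nat and, for each y,
  exactly one morphism (x,y) : x -> x + y.  Hence H C_oo is the poset
  category (N, <=), and an H C_oo-module (functor H C_oo -> Ab) is a family
  of abelian groups [Amod x] with additive maps [mor x y : Amod x -> Amod y]
  for x <= y (so y_* on Amod x is [mor x (x + y)]), functorial.
  ([mor x y] for x > y is irrelevant junk, never used.) *)
Record HCmod := {
  Amod : nat -> zmodType;
  mor : forall x y : nat, Amod x -> Amod y;
  mor_add : forall x y, (x <= y)%N -> forall a b, mor x y (a + b) = mor x y a + mor x y b;
  mor_id : forall x a, mor x x a = a;
  mor_comp : forall x y z, (x <= y)%N -> (y <= z)%N ->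
     forall a, mor y z (mor x y a) = mor x z a
}.

(** All algebras we need (Z C_oo and its iterated reduced bar constructions)
  are, in each degree, free H C_oo-modules on explicit basis elements:
  a basis element g of weight [wt g] generates a copy of the representable
  module Z[H C_oo(wt g, -)], i.e. it lives in A(wt g) and its image in A(x)
  (x >= wt g) is (x - wt g)_* g.  A formal linear combination
  [seq (c_k, h_k)] occurring as the value of an operation landing in A(w)
  stands for  sum_k c_k (w - wt h_k)_* h_k .
  Basis elements are encoded as rose trees. *)
Inductive tree : Type := Leaf of nat | Node of seq tree.

Record balg := BAlg {
  bas : tree -> bool;
  isu : tree -> bool;                      (* is the unit basis element iota(1) *)
  deg : tree -> nat;
  wt  : tree -> nat;                       (* weight: g lives in A(wt g) *)
  dif : tree -> seq (int * tree);
  mul : tree -> tree -> seq (int * tree);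
  aug : tree -> int
}.

Definition sgn (n : nat) : int := (-1) ^+ n.

(** Z C_oo: Z C_oo(x) is free on pairs (u,v), u + v = x, with y_*(u,v) = (y+u,v);
  so it is free on the basis elements b_v := (0,v) of weight v (= [Leaf v]),
  with (u,v) = u_* b_v;  b_v o b_w = b_(v+w), unit b_0, degree 0,
  augmentation 1, zero differential. *)
Definition ZN : balg := BAlg
  (fun g => if g is Leaf _ then true else false)
  (fun g => if g is Leaf v then v == 0%N else false)
  (fun _ => 0%N)
  (fun g => if g is Leaf v then v else 0%N)
  (fun _ => [::])
  (fun g h => match g, h with
              | Leaf v, Leaf w => [:: (1, Leaf (v + w))]
              | _, _ => [::] end)
  (fun g => if g is Leaf _ then 1 else 0).

(** Signed shuffles: [shuf dg s t] lists the (sign, shuffle) pairs of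
  [s ++ t] with sign (-1)^e(sigma), e(sigma) = sum over pairs (a in s, b in t)
  with a placed after b of (1 + dg a)(1 + dg b). *)
Definition wsum (dg : tree -> nat) (s : seq tree) : nat :=
  sumn [seq (dg x).+1 | x <- s].

Fixpoint shuf (dg : tree -> nat) (s t : seq tree) {struct s} : seq (int * seq tree) :=
  match s with
  | [::] => [:: (1, t)]
  | a :: s' =>
    let fix shuf_s (t : seq tree) : seq (int * seq tree) :=
      match t with
      | [::] => [:: (1, s)]
      | b :: t' =>
          [seq (cu.1, a :: cu.2) | cu <- shuf dg s' t] ++
          [seq (sgn ((dg b).+1 * wsum dg s) * cu.1, b :: cu.2) | cu <- shuf_s t']
      end in shuf_s t
  end.

Definition x0 : tree := Leaf 0.

(** Differential of the reduced bar construction on the basis element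
   [a_1|...|a_p] (encoded [Node s]), following the paper:
   d[a_1|..|a_p] = - sum_i (-1)^(e_(i-1)) [..|d a_i|..] + eps(a_1) x_1*[a_2|..]
                   + sum_(i<p) (-1)^(e_i) [..|a_i o a_(i+1)|..]
                   + (-1)^(e_p) eps(a_p) x_p*[..|a_(p-1)],
   e_i = i + r_1 + .. + r_i; terms are taken in coker iota, i.e. the
   unit basis element is dropped. *)
Definition bar_e (X : balg) (s : seq tree) (i : nat) : nat :=
  (i + sumn [seq deg X a | a <- take i s])%N.

Definition bar_dif (X : balg) (s : seq tree) : seq (int * tree) :=
  let p := size s in
  let t1 := flatten [seq [seq (- sgn (bar_e X s i) * ch.1, Node (set_nth x0 s i ch.2))
                         | ch <- [seq ch <- dif X (nth x0 s i) | ~~ isu X ch.2]]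
                    | i <- iota 0 p] in
  let t2 := if s is a :: s' then [:: (aug X a, Node s')] else [::] in
  let t3 := flatten [seq [seq (sgn (bar_e X s i.+1) * ch.1,
                               Node (take i s ++ ch.2 :: drop i.+2 s))
                         | ch <- [seq ch <- mul X (nth x0 s i) (nth x0 s i.+1)
                                 | ~~ isu X ch.2]]
                    | i <- iota 0 p.-1] in
  let t4 := if s is [::] then [::]
            else [:: (sgn (bar_e X s p) * aug X (nth x0 s p.-1), Node (take p.-1 s))] in
  t1 ++ t2 ++ t3 ++ t4.

(** The reduced bar construction B(X): basis = sequences [a_1|..|a_p] of
  non-unit basis elements of X (tensor products over H C_oo of free
  modules on representables are free on the concatenated basis), degree
  p + sum r_i, weight sum of weights, shuffle product, unit [ ],
  augmentation 1 on [ ] and 0 elsewhere. *)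
Definition bar (X : balg) : balg := BAlg
  (fun g => if g is Node s then all (fun a => bas X a && ~~ isu X a) s else false)
  (fun g => if g is Node s then nilp s else false)
  (fun g => if g is Node s then (size s + sumn [seq deg X a | a <- s])%N else 0%N)
  (fun g => if g is Node s then sumn [seq wt X a | a <- s] else 0%N)
  (fun g => if g is Node s then bar_dif X s else [::])
  (fun g h => match g, h with
              | Node s, Node t => [seq (cu.1, Node cu.2) | cu <- shuf (deg X) s t]
              | _, _ => [::] end)
  (fun g => if g is Node [::] then 1 else 0).

Definition barZ (r : nat) : balg := iter r bar ZN.

(** Cochains of Hom_{H C_oo}(X, A): a homomorphism out of the free module on
  the basis is determined by an element f g of A(wt g) for each basis
  element g.  Coboundary: (delta f)(g) = f(d g). *)
Definition cobound (X : balg) (A : HCmod) (f : forall g, Amod A (wt X g)) (g : tree)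
  : Amod A (wt X g) :=
  \sum_(ch <- dif X g) mor A (wt X ch.2) (wt X g) (f ch.2) *~ ch.1.

Definition Hn_vanishes (X : balg) (A : HCmod) (n : nat) : Prop :=
  forall f : forall g, Amod A (wt X g),
    (forall g, bas X g -> deg X g = n.+1 -> cobound X A f g = 0) ->
    exists phi : forall g, Amod A (wt X g),
      forall g, bas X g -> deg X g = n -> f g = cobound X A phi g.

(* Main.v *)
Require Import Defs.
From mathcomp Require Import all_boot all_algebra zify.
Import GRing.Theory.
Local Open Scope ring_scope.

Definition Nk (k : nat) (t : tree) : tree := iter k (fun t => Node [:: t]) t.

Lemma dif_single (Y : balg) (a : tree) :
  dif (bar Y) (Node [:: a]) =
  [seq (- 1 * ch.1, Node [:: ch.2]) | ch <- [seq ch <- dif Y a | ~~ isu Y ch.2]]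
  ++ [:: (aug Y a, Node [::]); (sgn (1 + (deg Y a + 0)) * aug Y a, Node [::])].
Proof. by rewrite /= /bar_dif /= cats0. Qed.

Definition nonunit_base (B : tree) := if B is Node (_ :: _) then true else false.

Lemma dif_nest j B : nonunit_base B ->
  dif (barZ j.+2) (Nk j.+1 B) =
  [seq (sgn j.+1 * ch.1, Nk j.+1 ch.2) | ch <- [seq ch <- dif (barZ 1) B | ~~ isu (barZ 1) ch.2]]
  ++ [:: (0, Node [::]); (0, Node [::])].
Proof.
move=> hB; elim: j => [|j IH].
  rewrite [LHS](dif_single (barZ 1) B).
  case: B hB => // [[|b s]] // _.
  by rewrite /= !mulr0.
rewrite [LHS](dif_single (barZ j.+2) (Nk j.+1 B)) IH.
rewrite filter_cat /= cats0 filter_map.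
rewrite (@eq_filter _ _ predT); last by [].
rewrite filter_predT -map_comp mulr0.
congr (_ ++ _); apply: eq_map => ch /=.
by rewrite mulrA /sgn [in RHS]exprS.
Qed.

Lemma wt_nest j t : wt (barZ j.+1) (Nk j t) = wt (barZ 1) t.
Proof.
elim: j => [|j IH] //.
by rewrite -[LHS]/(wt (barZ j.+1) (Nk j t) + 0)%N addn0 IH.
Qed.

Lemma nest_props j t : bas (barZ 1) t -> ~~ isu (barZ 1) t ->
  [&& bas (barZ j.+1) (Nk j t), ~~ isu (barZ j.+1) (Nk j t) &
      deg (barZ j.+1) (Nk j t) == (j + deg (barZ 1) t)%N].
Proof.
move=> h1 h2; elim: j => [|j IH]; first by rewrite h1 h2 /=.
case/and3P: IH => b1 b2 /eqP d1.
rewrite -[bas _ _]/((bas (barZ j.+1) (Nk j t) && ~~ isu (barZ j.+1) (Nk j t)) && true).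
rewrite -[deg _ _]/(1 + (deg (barZ j.+1) (Nk j t) + 0))%N.
by rewrite b1 b2 d1 /= addn0 add1n.
Qed.

Lemma deg_lb k g : bas (barZ k.+1) g -> ~~ isu (barZ k.+1) g ->
  (k.+1 <= deg (barZ k.+1) g)%N.
Proof.
elim: k g => [|k IH] [v|s] //.
  by case: s.
move=> hb hu.
have hb' : all (fun a => bas (barZ k.+1) a && ~~ isu (barZ k.+1) a) s by [].
have -> : deg (barZ k.+2) (Node s) = (size s + sumn [seq deg (barZ k.+1) a | a <- s])%N by [].
case: s hb hb' hu => [|a s] // _ /andP [/andP [ha hua] _] _.
have := IH a ha hua; rewrite map_cons (_ : forall x l, sumn (x :: l) = (x + sumn l)%N) // [size _]/=; lia.
Qed.

Lemma sumnC1 (f : tree -> nat) x l :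
  sumn [seq f y | y <- x :: l] = (f x + sumn [seq f y | y <- l])%N.
Proof. by []. Qed.
Lemma sumnN (f : tree -> nat) : sumn [seq f y | y <- [::]] = 0%N.
Proof. by []. Qed.

Lemma sumn0 (s : seq tree) : sumn [seq 0%N | _ <- s] = 0%N.
Proof. by elim: s. Qed.

Lemma classify k g : bas (barZ k.+1) g -> deg (barZ k.+1) g = k.+2 ->
  exists v w, g = Nk k (Node [:: Leaf v.+1; Leaf w.+1]).
Proof.
elim: k g => [|k IH] [x|s] //.
  move=> hb hd.
  have hd' : (size s + sumn [seq 0%N | _ <- s])%N = 2 by [].
  rewrite sumn0 addn0 in hd'.
  case: s hb hd hd' => [|[a|?] [|[b|?] [|? ?]]] //= hb _ _; try by rewrite andbF in hb.
  case: a hb => [|a]; case: b => [|b] // _.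
  by exists a, b.
move=> hb hd.
have hb' : all (fun a => bas (barZ k.+1) a && ~~ isu (barZ k.+1) a) s by [].
have hd' : (size s + sumn [seq deg (barZ k.+1) a | a <- s])%N = k.+3 by [].
case: s hb' hd' {hb hd} => [|a [|b s]] //.
  case/andP => /andP [ha _] _; rewrite [size _]/= sumnC1 sumnN => hd.
  have [v [w ->]] := IH a ha ltac:(lia).
  by exists v, w.
case/and3P => /andP [ha hua] /andP [hb hub] _.
rewrite [size _]/= !sumnC1.
have := deg_lb _ _ ha hua; have := deg_lb _ _ hb hub; lia.
Qed.
Lemma lin (V : zmodType) (X a b c d e p : V) : (p - d + a) - (p - e + b) + X - (a - b + c) = 0 -> X = d - e + c.
Proof.
move/eqP; rewrite subr_eq0 => /eqP h.
have : X = (a - b + c) - ((p - d + a) - (p - e + b)) by rewrite -h addrC addKr.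
move=> ->.
rewrite !opprD !opprK !addrA.
rewrite (addrAC _ (-a) p) (addrAC _ d p) subrK.
rewrite (addrAC _ d (-a)) (addrAC _ c (-a)) (addrAC a (-b) (-a)) subrr add0r.
rewrite (addrAC _ (-e) b) (addrAC _ d b) (addrAC _ c b) addNr add0r.
by rewrite addrAC addrC addrA addrAC.
Qed.

Section Mod.
Variable A : HCmod.

Lemma mor0 x y : (x <= y)%N -> mor A x y 0 = 0.
Proof.
move=> h; have := mor_add A _ _ h 0 0; rewrite addr0 => e.
by apply: (addrI (mor A x y 0)); rewrite addr0 -e.
Qed.

Lemma morN x y a : (x <= y)%N -> mor A x y (- a) = - mor A x y a.
Proof.
move=> h; apply/eqP; rewrite -subr_eq0 opprK -mor_add // addNr.
by rewrite mor0.
Qed.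

Lemma morB x y a b : (x <= y)%N -> mor A x y (a - b) = mor A x y a - mor A x y b.
Proof. by move=> h; rewrite mor_add // morN. Qed.

Lemma morMz x y a (z : int) : (x <= y)%N -> mor A x y (a *~ z) = mor A x y a *~ z.
Proof.
move=> h.
have pos : forall n, mor A x y (a *+ n) = mor A x y a *+ n.
  elim=> [|n IH]; first by rewrite !mulr0n mor0.
  by rewrite !mulrS mor_add // IH.
case: z => n; first exact: pos.
by rewrite !NegzE !mulrNz morN // -!pmulrn pos.
Qed.

Lemma mor_sum x y (I : Type) (r : seq I) (F : I -> Amod A x) : (x <= y)%N ->
  mor A x y (\sum_(i <- r) F i) = \sum_(i <- r) mor A x y (F i).
Proof.
move=> h; elim: r => [|i r IH]; first by rewrite !big_nil mor0.
by rewrite !big_cons mor_add // IH.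
Qed.
End Mod.

Section Solve.
Variable A : HCmod.
Variable H : nat -> nat -> forall N, Amod A N.
Hypothesis Hpush : forall v w N M, (v + w <= N)%N -> (N <= M)%N ->
  mor A N M (H v w N) = H v w M.
Hypothesis Hc : forall u v w, (0 < u)%N -> (0 < v)%N -> (0 < w)%N ->
  H v w (u + v + w) - H (u + v) w (u + v + w) + H u (v + w) (u + v + w)
  - H u v (u + v + w) = 0.

Definition step m (p : Amod A m) : Amod A m.+1 :=
  if m == 0%N then 0 else mor A m m.+1 p - H m 1 m.+1.

Fixpoint Pf (n : nat) : Amod A n :=
  match n return Amod A n with 0 => 0 | m.+1 => @step m (Pf m) end.

Definition E v w N := H v w N =
  mor A w N (Pf w) - mor A (v + w) N (Pf (v + w)) + mor A v N (Pf v).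

Lemma Epush v w N : E v w (v + w) -> (v + w <= N)%N -> E v w N.
Proof.
rewrite /E => e h.
rewrite -(Hpush v w (v + w) N) // e mor_add // morB // mor_id.
rewrite (mor_comp A _ _ _ (leq_addl v w) h) (mor_comp A _ _ _ (leq_addr w v) h).
by [].
Qed.

Arguments Epush {v w N}.

Lemma Ebase v : (0 < v)%N -> E v 1 (v + 1).
Proof.
case: v => // n _; rewrite /E addn1 [Pf n.+2]/= [Pf 1]/= /step /= mor0 // mor_id.
by rewrite sub0r opprB subrK.
Qed.

Arguments Ebase {v}.

Lemma Eall w v : (0 < v)%N -> forall N, (v + w.+1 <= N)%N -> E v w.+1 N.
Proof.
elim: w v => [|w IH] v hv N hN; first exact: Epush (Ebase hv) hN.
apply: Epush hN.
have Hc' := Hc v w.+1 1 hv isT isT.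
have h1 : E w.+1 1 (v + w.+1 + 1) := @Epush w.+1 1 (v + w.+1 + 1) (@Ebase w.+1 isT) ltac:(lia).
have h2 : E (v + w.+1) 1 (v + w.+1 + 1) := @Ebase (v + w.+1) ltac:(lia).
have h3 : E v w.+1 (v + w.+1 + 1) := IH v hv (v + w.+1 + 1) ltac:(lia).
rewrite /E in h1 h2 h3 *.
rewrite h1 h2 h3 in Hc'.
rewrite !addn1 in Hc'; rewrite addnS.
exact: lin Hc'.
Qed.

Lemma Esol v w : (0 < v)%N -> (0 < w)%N -> E v w (v + w).
Proof. by case: w => // w hv _; apply: Eall. Qed.
End Solve.

Definition P2 v w := Node [:: Leaf v; Leaf w].
Lemma dif2 v w : [seq ch <- dif (barZ 1) (Node [:: Leaf v.+1; Leaf w.+1]) | ~~ isu (barZ 1) ch.2]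
  = [:: (1, Node [:: Leaf w.+1]); (-1, Node [:: Leaf (v.+1 + w.+1)]); (1, Node [:: Leaf v.+1])].
Proof. by []. Qed.
Lemma dif3 u v w : [seq ch <- dif (barZ 1) (Node [:: Leaf u.+1; Leaf v.+1; Leaf w.+1]) | ~~ isu (barZ 1) ch.2]
  = [:: (1, P2 v.+1 w.+1); (-1, P2 (u.+1 + v.+1) w.+1); (1, P2 u.+1 (v.+1 + w.+1)); (-1, P2 u.+1 v.+1)].
Proof. by []. Qed.

Lemma sum4 (V : zmodType) (I : Type) (F : I -> V) a b c d :
  \sum_(i <- [:: a; b; c; d]) F i = F a + F b + F c + F d.
Proof. by rewrite !big_cons big_nil addr0 !addrA. Qed.
Lemma sum3 (V : zmodType) (I : Type) (F : I -> V) a b c :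
  \sum_(i <- [:: a; b; c]) F i = F a + F b + F c.
Proof. by rewrite !big_cons big_nil addr0 !addrA. Qed.
Lemma sum2 (V : zmodType) (I : Type) (F : I -> V) a b :
  \sum_(i <- [:: a; b]) F i = F a + F b.
Proof. by rewrite !big_cons big_nil addr0. Qed.

Lemma sumcat (V : zmodType) (I : Type) (F : I -> V) s1 s2 :
  \sum_(i <- s1 ++ s2) F i = \sum_(i <- s1) F i + \sum_(i <- s2) F i.
Proof. by rewrite big_cat. Qed.

Lemma wt1 x : wt (barZ 1) (Node [:: Leaf x]) = x.
Proof. by rewrite /= addn0. Qed.

Theorem corollary7p13 :
  forall (r : nat) (A : HCmod), (2 <= r)%N -> Hn_vanishes (barZ r) A r.+1.
Proof.
move=> [|[|j]] A // _ f hf.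
pose eps : int := sgn j.+1.
have ee : eps * eps = 1 by rewrite /eps /sgn -exprMn mulrNN mulr1 expr1n.
pose T t := Nk j.+1 t.
have wtT t : wt (barZ j.+2) (T t) = wt (barZ 1) t by exact: wt_nest.
have wP2 v w : wt (barZ 1) (P2 v w) = (v + w)%N by rewrite /= addn0.
pose Hd v w N := mor A (wt (barZ j.+2) (T (P2 v w))) N (f (T (P2 v w))) *~ eps.
have Hpush : forall v w N M, (v + w <= N)%N -> (N <= M)%N -> mor A N M (Hd v w N) = Hd v w M.
  move=> v w N M h1 h2; rewrite /Hd morMz // mor_comp //.
  by rewrite wtT wP2.
have Hc : forall u v w, (0 < u)%N -> (0 < v)%N -> (0 < w)%N ->
  Hd v w (u + v + w)%N - Hd (u + v)%N w (u + v + w)%N + Hd u (v + w)%N (u + v + w)%N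
  - Hd u v (u + v + w)%N = 0.
{ move=> [|u] [|v] [|w] // _ _ _.
  have hb : bas (barZ 1) (Node [:: Leaf u.+1; Leaf v.+1; Leaf w.+1]) by [].
  have hu : ~~ isu (barZ 1) (Node [:: Leaf u.+1; Leaf v.+1; Leaf w.+1]) by [].
  have /and3P [b3 _ /eqP d3] := nest_props j.+1 _ hb hu.
  have := hf _ b3 ltac:(by rewrite d3 -[deg (barZ 1) _]/3%N addn3).
  rewrite /cobound (dif_nest j (Node [:: Leaf u.+1; Leaf v.+1; Leaf w.+1]) isT) dif3 sumcat big_map sum4 sum2.
  move/(congr1 (mor A (wt (barZ j.+2) (Nk j.+1 (Node [:: Leaf u.+1; Leaf v.+1; Leaf w.+1]))) (u.+1 + v.+1 + w.+1))).
  cbv [fst snd]. rewrite !mulr0z !addr0 mor0; last by rewrite wt_nest /=; lia.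
  rewrite !mor_add ?morMz ?mor_comp.
  - by rewrite !mulrzA !mulr1z !mulrN1z.
  all: rewrite ?wt_nest /= ?addn0; lia. }
exists (fun g => @Pf A Hd (wt (barZ j.+2) g)).
move=> g hb hd.
have [v [w eg]] := classify j.+1 g hb hd.
subst g.
have hE := @Esol A Hd Hpush Hc v.+1 w.+1 isT isT.
rewrite /E in hE.
have hWS : wt (barZ j.+2) (Nk j.+1 (Node [:: Leaf v.+1; Leaf w.+1])) = (v.+1 + w.+1)%N.
  by rewrite wt_nest /= addn0.
apply: (@can_inj _ _ (mor A (wt (barZ j.+2) (Nk j.+1 (Node [:: Leaf v.+1; Leaf w.+1]))) (v.+1 + w.+1))
   (mor A (v.+1 + w.+1) (wt (barZ j.+2) (Nk j.+1 (Node [:: Leaf v.+1; Leaf w.+1]))))).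
  by move=> a; rewrite mor_comp ?mor_id // hWS.
have -> : mor A (wt (barZ j.+2) (Nk j.+1 (Node [:: Leaf v.+1; Leaf w.+1]))) (v.+1 + w.+1)
   (f (Nk j.+1 (Node [:: Leaf v.+1; Leaf w.+1]))) = Hd v.+1 w.+1 (v.+1 + w.+1)%N *~ eps.
  by rewrite /Hd -mulrzA ee mulr1z.
rewrite hE /cobound (dif_nest j (Node [:: Leaf v.+1; Leaf w.+1]) isT) dif2 sumcat big_map sum3 sum2.
cbv [fst snd]. rewrite !mulr0z addr0 !mor_add ?morMz ?mor_comp ?mor0 ?addr0.
- rewrite !wt_nest !wt1 !mulrzA !mulr1z !mulrN1z mulrzDl mulrzBl.
  by [].
all: rewrite ?wt_nest ?wt1 /= ?addn0; lia.
Qed.
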